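(* Let $X \subseteq \mathbb{Z}^n$ be a closed set, $c \in \mathbb{R}^n$, $Q$ an $n\times n$ symmetric positive semidefinite matrix, and $\Omega > 0$. Define $h:\mathbb{R}^n \times \mathbb{R}_+ \to \mathbb{R}\cup\{+\infty\}$ by $h(x,t) = \frac{x'Qx}{t}$ if $t>0$; $h(x,0) = 0$ if $x'Qx = 0$; and $h(x,0) = +\infty$ otherwise. Let $f(t) = \min_{x \in X}\{ c'x + \frac{\Omega}{2}h(x,t) + \frac{\Omega}{2}t\}$ for $t \ge 0$. Then the mean-risk problem and the perspective reformulation are equivalent, i.e., $$\min\left\{c'x + \Omega\sqrt{x'Qx} : x \in X\right\} = \min\{f(t) : t \ge 0\}.$$
   Context: $h$ is the closure of the perspective function of the convex quadratic $q(x)=x'Qx$. The minima appearing (in the definition of $f$ and in both sides of the equality) are assumed to be attained. *)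

(* Defs.v *)
From HB Require Import structures.
From mathcomp Require Import all_boot all_order all_algebra.
From mathcomp Require Import all_classical all_reals all_analysis.
Set Implicit Arguments. Unset Strict Implicit. Unset Printing Implicit Defensive.
Import Order.TTheory GRing.Theory Num.Theory.
Import numFieldNormedType.Exports.
Local Open Scope classical_set_scope.
Local Open Scope ring_scope.

Definition qform (R : realType) (n : nat) (Q : 'M[R]_n) (x : 'cV[R]_n) : R :=
  (x^T *m Q *m x) 0 0.

Definition lin (R : realType) (n : nat) (c x : 'cV[R]_n) : R := (c^T *m x) 0 0.

(* h = closure of the perspective of q; only used for t >= 0 *)
Definition persp (R : realType) (n : nat) (Q : 'M[R]_n) (x : 'cV[R]_n) (t : R)
  : \bar R :=
  if 0 < t then (qform Q x / t)%:E
  else if qform Q x == 0 then 0%E else +oo%E.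

Definition persp_obj (R : realType) (n : nat) (Q : 'M[R]_n) (c : 'cV[R]_n)
  (Om : R) (x : 'cV[R]_n) (t : R) : \bar R :=
  ((lin c x)%:E + (Om / 2)%:E * persp Q x t + (Om / 2 * t)%:E)%E.

(* f(t) = min_{x in X} persp_obj x t  (as an infimum; attainment is a hypothesis) *)
Definition fval (R : realType) (n : nat) (X : set 'cV[R]_n) (Q : 'M[R]_n)
  (c : 'cV[R]_n) (Om : R) (t : R) : \bar R :=
  ereal_inf [set persp_obj Q c Om x t | x in X].

Definition mr_obj (R : realType) (n : nat) (Q : 'M[R]_n) (c : 'cV[R]_n) (Om : R)
  (x : 'cV[R]_n) : R := lin c x + Om * Num.sqrt (qform Q x).

(* Main.v *)
Require Import Defs.
From HB Require Import structures.
From mathcomp Require Import all_boot all_order all_algebra.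
From mathcomp Require Import all_classical all_reals all_analysis.
From mathcomp Require Import ring lra.
Import Order.TTheory GRing.Theory Num.Theory.
Import numFieldNormedType.Exports.
Local Open Scope classical_set_scope.
Local Open Scope ring_scope.

Lemma persp_ge (R : realType) (n : nat) (Q : 'M[R]_n) (c x : 'cV[R]_n) (Om t : R) :
  0 <= qform Q x -> 0 < Om -> 0 <= t ->
  ((mr_obj Q c Om x)%:E <= persp_obj Q c Om x t)%E.
Proof.
move=> q0 Om0 t0; rewrite /persp_obj /persp /mr_obj.
case: ifPn => [tp|tn].
  rewrite -!EFinM -!EFinD lee_fin -addrA lerD2l.
  set q := qform Q x in q0 *; set s := Num.sqrt q; set u := q / t.
  have hs : s ^+ 2 = q by rewrite sqr_sqrtr.
  have s0 : 0 <= s by rewrite sqrtr_ge0.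
  have hu : u * t = q by rewrite /u mulfVK // gt_eqF.
  have u0 : 0 <= u by rewrite /u divr_ge0.
  rewrite -mulrDr.
  have -> : Om * s = Om / 2 * (2 * s) by rewrite mulrA divfK ?pnatr_eq0.
  have : 2 * s <= u + t.
    rewrite -(ler_pXn2r (n:=2)) //; last 2 first.
      by rewrite nnegrE mulr_ge0.
      by rewrite nnegrE addr_ge0.
    rewrite exprMn hs -hu. have := sqr_ge0 (u - t). nra.
  by move=> h; rewrite ler_pM2l // divr_gt0.
have -> : t = 0 by apply/eqP; rewrite eq_le t0 andbT leNgt.
case: ifPn => [/eqP ->|qn].
  by rewrite sqrtr0 mulr0 mule0 !mulr0 !adde0 addr0.
rewrite gt0_muley ?lte_fin ?divr_gt0 //.
by rewrite addey // leey.
Qed.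

Lemma persp_eq (R : realType) (n : nat) (Q : 'M[R]_n) (c x : 'cV[R]_n) (Om : R) :
  0 <= qform Q x ->
  persp_obj Q c Om x (Num.sqrt (qform Q x)) = (mr_obj Q c Om x)%:E.
Proof.
move=> q0; rewrite /persp_obj /persp /mr_obj.
rewrite sqrtr_gt0; case: ifPn => [qp|qn].
  rewrite -!EFinM -!EFinD; congr (_%:E).
  have sp : 0 < Num.sqrt (qform Q x) by rewrite sqrtr_gt0.
  rewrite -{1}(sqr_sqrtr q0) expr2 mulfK ?gt_eqF //.
  rewrite -addrA -mulrDr -mulr2n -mulr_natr; congr (_ + _).
  by rewrite mul1r -mulr_natr; field.
have -> : qform Q x = 0 by apply/eqP; rewrite eq_le q0 andbT leNgt.
by rewrite eqxx sqrtr0 !mulr0 mule0 !adde0 addr0.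
Qed.
Theorem proposition3 (R : realType) (n : nat) (X : set 'cV[R]_n)
  (c : 'cV[R]_n) (Q : 'M[R]_n) (Om : R) :
  (forall x, X x -> forall i, x i 0 \is a Num.int) ->
  closed X ->
  Q^T = Q ->
  (forall x : 'cV[R]_n, 0 <= qform Q x) ->
  0 < Om ->
  (* the minima are attained *)
  (exists2 x0, X x0 &
     (mr_obj Q c Om x0)%:E = ereal_inf [set (mr_obj Q c Om x)%:E | x in X]) ->
  (forall t, 0 <= t -> exists2 x0, X x0 & persp_obj Q c Om x0 t = fval X Q c Om t) ->
  (exists2 t0, 0 <= t0 &
     fval X Q c Om t0 = ereal_inf [set fval X Q c Om t | t in [set t | 0 <= t]]) ->
  ereal_inf [set (mr_obj Q c Om x)%:E | x in X] =
  ereal_inf [set fval X Q c Om t | t in [set t | 0 <= t]].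
Proof.
move=> _ _ _ hq hOm _ _ _.
apply/eqP; rewrite eq_le; apply/andP; split.
  apply: le_ereal_inf_tmp => _ [t t0 <-].
  apply: le_ereal_inf_tmp => _ [x Xx <-].
  apply: le_trans (@persp_ge _ _ Q c x Om t (hq x) hOm t0).
  by apply: ereal_inf_lbound; exists x.
apply: le_ereal_inf_tmp => _ [x Xx <-].
apply: (@le_trans _ _ (fval X Q c Om (Num.sqrt (qform Q x)))).
  by apply: ereal_inf_lbound; exists (Num.sqrt (qform Q x)) => //=; rewrite sqrtr_ge0.
rewrite -(@persp_eq _ _ Q c x Om (hq x)).
by apply: ereal_inf_lbound; exists x.
Qed.
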